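(* Let $\beta=(b_1,\ldots,b_m)$ be a composition of $d$. Then \[ \sum_{w\in\mathcal{L}(S_\beta,\nu)}q^{\mathrm{maj}(w)}=\sum_{D\in\mathcal{E}_d(r_1,\ldots,r_{m-1})}q^{\mathrm{maj}(D)-2(r_1+\cdots+r_{m-1})}, \] where for $m=1$ the sum $r_1+\cdots+r_{m-1}$ is $0$.
   Context: Put $r_0=0$, $r_i=b_1+\cdots+b_i$. The poset $S_\beta$ is $\bigcup_{l=1}^m\{(i,j)\in\mathbb{N}^2: l\le i\le l+1,\ r_{l-1}+1\le j\le r_l\}$ with $(i_1,j_1)\le(i_2,j_2)$ iff $i_1\le i_2$ and $j_1\le j_2$, with natural labeling $\nu(i,j)=r_{l-1}+j+(i-l)b_l$ where $r_{l-1}+1\le j\le r_l$. A linear extension is an order-preserving bijection $\sigma:S_\beta\to\{1,\ldots,2d\}$, identified with the permutation $w=\nu(\sigma^{-1}(1))\cdots\nu(\sigma^{-1}(2d))$; $\mathcal{L}(S_\beta,\nu)$ is the set of these permutations, and $\mathrm{maj}(w)=\sum\{k: w_k>w_{k+1}\}$. A Dyck path from $(0,0)$ to $(2d,0)$ is a lattice path with steps $(1,1),(1,-1)$ never going below the $x$-axis; a valley is an interior point preceded by a $(1,-1)$ step and followed by a $(1,1)$ step, a return is a valley on the $x$-axis, and $\mathrm{maj}(D)$ is the sum of the $x$-coordinates of all valleys of $D$. $\mathcal{E}_d(x_1,\ldots,x_{r})$ is the set of Dyck paths from $(0,0)$ to $(2d,0)$ having returns at $(2x_1,0),\ldots,(2x_r,0)$,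 these being exactly the marked returns (for $r=0$: Dyck paths with no marked returns). *)

(* Defs.v *)
From mathcomp Require Import all_boot all_order all_algebra.
Set Implicit Arguments. Unset Strict Implicit. Unset Printing Implicit Defensive.

Definition rpart (beta : seq nat) (i : nat) : nat := sumn (take i beta).

(* b_l (1-indexed) *)
Definition bpart (beta : seq nat) (l : nat) : nat := nth 0 beta l.-1.

Definition inS (beta : seq nat) (c : nat * nat) : bool :=
  has (fun l => [&& l <= c.1, c.1 <= l.+1,
                    rpart beta l.-1 < c.2 & c.2 <= rpart beta l])
      (iota 1 (size beta)).

Definition leS (c1 c2 : nat * nat) : bool := (c1.1 <= c2.1) && (c1.2 <= c2.2).

(* all cells of S_beta (every cell has 1 <= i <= m+1 and 1 <= j <= d) *)
Definition cellsS (beta : seq nat) : seq (nat * nat) :=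
  [seq c <- [seq (i, j) | i <- iota 1 (size beta).+1, j <- iota 1 (sumn beta)]
   | inS beta c].

Definition blk (beta : seq nat) (j : nat) : nat :=
  find (fun l => j <= rpart beta l) (iota 0 (size beta).+1).

Definition nu (beta : seq nat) (c : nat * nat) : nat :=
  let l := blk beta c.2 in
  rpart beta l.-1 + c.2 + (c.1 - l) * bpart beta l.

(* A linear extension sigma : S_beta -> {1,...,2d} is encoded by the listing
   s = [sigma^{-1}(1); ...; sigma^{-1}(2d)]: s is a permutation of the cells of
   S_beta, and sigma (= 1 + position in s) is order preserving. *)
Definition is_linext (beta : seq nat) (s : seq (nat * nat)) : bool :=
  all (fun a => all (fun b => leS (nth (0, 0) s a) (nth (0, 0) s b) ==> (a <= b))
                    (iota 0 (size s)))
      (iota 0 (size s)).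

(* L(S_beta, nu): the set of permutations w = nu(sigma^{-1}(1)) ... nu(sigma^{-1}(2d)) *)
Definition linext_perms (beta : seq nat) : seq (seq nat) :=
  undup [seq map (nu beta) s | s <- permutations (cellsS beta) & is_linext beta s].

Definition maj (w : seq nat) : nat :=
  \sum_(1 <= k < size w | nth 0 w k.-1 > nth 0 w k) k.

(* A path is a sequence of steps: true = (1,1), false = (1,-1).
   The point with x-coordinate k is reached after the first k steps; its
   height is (#up - #down) among them. *)

Definition nups (p : seq bool) (k : nat) : nat := count id (take k p).
Definition ndowns (p : seq bool) (k : nat) : nat := count negb (take k p).

Definition dyck (d : nat) (p : seq bool) : bool :=
  [&& size p == 2 * d,
      all (fun k => ndowns p k <= nups p k) (iota 0 (2 * d).+1)
    & nups p (2 * d) == ndowns p (2 * d)].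

Definition valley (p : seq bool) (k : nat) : bool :=
  [&& 0 < k, k < size p, ~~ nth true p k.-1 & nth false p k].

Definition is_return (p : seq bool) (k : nat) : bool :=
  valley p k && (nups p k == ndowns p k).

Definition majD (p : seq bool) : nat :=
  \sum_(0 <= k < size p | valley p k) k.

Definition inEd (d : nat) (xs : seq nat) (p : seq bool) : bool :=
  dyck d p && all (fun x => is_return p (2 * x)) xs.

Definition rlist (beta : seq nat) : seq nat :=
  [seq rpart beta i | i <- iota 1 (size beta).-1].

(* Main.v *)
Require Import Defs.
From mathcomp Require Import all_boot all_order all_algebra.
From mathcomp Require Import zify.
Import GRing.Theory.
Set Implicit Arguments. Unset Strict Implicit. Unset Printing Implicit Defensive.

Lemma rpartS beta l : rpart beta l.+1 = rpart beta l + nth 0 beta l.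
Proof.
rewrite /rpart; elim: beta l => [|b beta IH] [|l] /=; rewrite ?take0 ?nth_nil ?addn0 //.
by rewrite IH addnA.
Qed.

Lemma rpart_mono beta l l' : l <= l' -> rpart beta l <= rpart beta l'.
Proof.
move=> /subnKC <-; elim: (l' - l) => [|k IH]; first by rewrite addn0.
by rewrite addnS rpartS; apply: leq_trans IH (leq_addr _ _).
Qed.

Lemma rpart_full beta l : size beta <= l -> rpart beta l = sumn beta.
Proof. by move=> h; rewrite /rpart take_oversize. Qed.

Section Blk.
Variable beta : seq nat.
Let m := size beta.
Let d := sumn beta.
Notation R := (rpart beta).

Lemma blk_has j : j <= d -> has (fun l => j <= R l) (iota 0 m.+1).
Proof.
move=> hj; apply/hasP; exists m; first by rewrite mem_iota add0n ltnS leqnn.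
by rewrite rpart_full.
Qed.

Lemma blk_le_m j : j <= d -> blk beta j <= m.
Proof. by move=> /blk_has; rewrite has_find size_iota ltnS. Qed.

Lemma blk_spec j : j <= d -> j <= R (blk beta j).
Proof.
move=> hj; have hh := blk_has hj.
have := nth_find 0 hh; rewrite /blk nth_iota //.
by move: hh; rewrite has_find size_iota.
Qed.

Lemma blk_min j l : j <= R l -> blk beta j <= l.
Proof.
move=> hl; case: (leqP l m) => [lm|hml].
  2: by apply: leq_trans (ltnW hml); apply: blk_le_m; rewrite /d -(rpart_full (ltnW hml)).
rewrite leqNgt; apply/negP => hlt.
have := before_find 0 hlt; rewrite nth_iota ?hl //.
Qed.

Lemma blk_lt j l : j <= d -> R l < j -> l < blk beta j.
Proof.
move=> hd h; rewrite ltnNge; apply/negP=> hb.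
have := leq_trans (blk_spec hd) (rpart_mono beta hb); rewrite leqNgt h.
done.
Qed.

Lemma blk_ge1 j : 0 < j -> j <= d -> 0 < blk beta j.
Proof. by move=> h0 hd; apply: blk_lt => //; rewrite /rpart take0. Qed.

Lemma blk_prev j : 0 < j -> j <= d -> R (blk beta j).-1 < j.
Proof.
move=> h0 hd; rewrite ltnNge; apply/negP => /blk_min.
by have := blk_ge1 h0 hd; case: (blk beta j) => //= n _; rewrite ltnn.
Qed.

Lemma blk_mono j j' : j <= j' -> j' <= d -> blk beta j <= blk beta j'.
Proof. by move=> h hd; apply: blk_min; apply: leq_trans h (blk_spec hd). Qed.

Definition ftop j := R (blk beta j).-1 + j.
Definition gbot j := R (blk beta j) + j.

Ltac mono l l' := have := @rpart_mono beta l l'.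

Lemma ff u u' : 0 < u -> u < u' -> u' <= d -> ftop u < ftop u'.
Proof.
move=> h0 hlt hd; rewrite /ftop.
have hud : u <= d by lia.
have := blk_mono (ltnW hlt) hd; rewrite leq_eqVlt => /orP[/eqP->|hb]; first lia.
have := blk_spec hud; have := blk_prev (ltnW (leq_ltn_trans h0 hlt)) hd.
mono (blk beta u) (blk beta u').-1; mono (blk beta u).-1 (blk beta u').-1; lia.
Qed.

Lemma gg u u' : 0 < u -> u < u' -> u' <= d -> gbot u < gbot u'.
Proof.
move=> h0 hlt hd; rewrite /gbot.
have hud : u <= d by lia.
have := blk_mono (ltnW hlt) hd; rewrite leq_eqVlt => /orP[/eqP->|hb]; first lia.
have := blk_spec hud; have := blk_prev (ltnW (leq_ltn_trans h0 hlt)) hd.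
mono (blk beta u) (blk beta u').-1; mono (blk beta u) (blk beta u'); lia.
Qed.

Lemma fg u v : 0 < u -> u <= d -> 0 < v -> v <= d -> blk beta u <= blk beta v -> ftop u < gbot v.
Proof.
move=> h0 hd h0' hd' hb; rewrite /ftop /gbot.
have := blk_spec hd; have := blk_prev h0' hd'.
mono (blk beta u) (blk beta v); mono (blk beta u).-1 (blk beta v).-1; lia.
Qed.

Lemma gf u v : 0 < u -> u <= d -> 0 < v -> v <= d -> blk beta v < blk beta u -> gbot v < ftop u.
Proof.
move=> h0 hd h0' hd' hb; rewrite /ftop /gbot.
have := blk_spec hd'; have := blk_prev h0 hd.
mono (blk beta v) (blk beta u).-1; lia.
Qed.

End Blk.

Lemma nupsS p k : k < size p -> nups p k.+1 = nups p k + nth false p k.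
Proof. by move=> h; rewrite /nups (take_nth false h) -cats1 count_cat /=; case: nth. Qed.

Lemma ndownsS p k : k < size p -> ndowns p k.+1 = ndowns p k + ~~ nth false p k.
Proof. by move=> h; rewrite /ndowns (take_nth false h) -cats1 count_cat /=; case: nth. Qed.

Lemma nups_mono p k k' : k <= k' -> nups p k <= nups p k'.
Proof. by move=> /subnKC <-; rewrite /nups takeD count_cat leq_addr. Qed.

Lemma ndowns_mono p k k' : k <= k' -> ndowns p k <= ndowns p k'.
Proof. by move=> /subnKC <-; rewrite /ndowns takeD count_cat leq_addr. Qed.

Lemma nups_ndowns p k : k <= size p -> nups p k + ndowns p k = k.
Proof.
move=> h; rewrite /nups /ndowns.
have := count_predC id (take k p); rewrite size_takel //.
Qed.

Lemma nups_over p k : size p <= k -> nups p k = nups p (size p).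
Proof. by move=> h; rewrite /nups !take_oversize. Qed.
Lemma ndowns_over p k : size p <= k -> ndowns p k = ndowns p (size p).
Proof. by move=> h; rewrite /ndowns !take_oversize. Qed.

Section Dyck.
Variables (d : nat) (p : seq bool).
Hypothesis hD : dyck d p.

Lemma dy_size : size p = 2 * d.
Proof. by case/and3P: hD => /eqP. Qed.

Lemma dy_le k : ndowns p k <= nups p k.
Proof.
case/and3P: hD => _ /allP h _.
case: (leqP k (2 * d)) => hk; first by apply: h; rewrite mem_iota.
rewrite nups_over ?ndowns_over dy_size ?(ltnW hk) //; apply: h; rewrite mem_iota; lia.
Qed.

Lemma dy_end : nups p (2 * d) = d /\ ndowns p (2 * d) = d.
Proof.
case/and3P: hD => _ _ /eqP e.
have := nups_ndowns (k := 2 * d) (p := p); rewrite dy_size leqnn => /(_ isT); lia.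
Qed.

Lemma nups_le_d k : nups p k <= d.
Proof.
case: (leqP k (2 * d)) => hk; first by case: dy_end => <- _; apply: nups_mono.
by rewrite nups_over dy_size ?(ltnW hk) //; case: dy_end => ->.
Qed.

Lemma ndowns_le_d k : ndowns p k <= d.
Proof.
case: (leqP k (2 * d)) => hk; first by case: dy_end => _ <-; apply: ndowns_mono.
by rewrite ndowns_over dy_size ?(ltnW hk) //; case: dy_end => _ ->.
Qed.

Lemma dy_return x : 0 < x < d -> nups p (2 * x) = x -> ndowns p (2 * x) = x ->
  is_return p (2 * x).
Proof.
move=> /andP[x0 xd] hu hd.
rewrite /is_return /valley hu hd eqxx andbT dy_size.
have k1 : (2 * x).-1 < size p by rewrite dy_size; lia.
have k2 : 2 * x < size p by rewrite dy_size; lia.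
apply/and4P; split; try lia.
- apply/negP => hup.
  have := dy_le (2 * x).-1.
  have := nupsS k1; have := ndownsS k1.
  rewrite (set_nth_default false) // in hup; rewrite hup /=.
  have -> : (2 * x).-1.+1 = 2 * x by lia.
  rewrite hu hd; lia.
- apply/negPn/negP => hdn.
  have := dy_le (2 * x).+1.
  have := nupsS k2; have := ndownsS k2.
  move/negbTE: hdn => ->; rewrite hu hd /=; lia.
Qed.

End Dyck.

Section Cells.
Variable beta : seq nat.
Let m := size beta.
Let d := sumn beta.
Notation R := (rpart beta).
Notation blk := (blk beta).

Definition top j : nat * nat := (blk j, j).
Definition bot j : nat * nat := ((blk j).+1, j).
Definition isTop (c : nat * nat) : bool := c.1 == blk c.2.

Definition inCells (c : nat * nat) : bool :=
  [&& 0 < c.2, c.2 <= d & (c.1 == blk c.2) || (c.1 == (blk c.2).+1)].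

Lemma mem_cellsS c : (c \in cellsS beta) = inCells c.
Proof.
case: c => i j; rewrite /cellsS mem_filter /inCells.
apply/idP/idP.
- case/andP => /hasP [l]; rewrite mem_iota => hl /and4P[h1 h2 h3 h4].
  case/allpairsP => [[i' j']] [hi hj [ei ej]]; subst i j.
  move: h1 h2 h3 h4 hi hj; rewrite /= => h1 h2 h3 h4 hi hj.
  move: hj; rewrite mem_iota => hj.
  have jd : j' <= d by rewrite /d; lia.
  have e1 := blk_min h4.
  have e2 : l.-1 < blk j' by apply: blk_lt.
  have e : blk j' = l by lia.
  rewrite e; apply/and3P; split => //; first lia.
  apply/orP; lia.
- case/and3P => j0 jd hij; rewrite /= in j0 jd hij.
  have b1 := blk_ge1 j0 jd; have b2 := blk_le_m jd.
  have b3 := blk_spec jd; have b4 := blk_prev j0 jd.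
  apply/andP; split.
  + apply/hasP; exists (blk j); first by rewrite mem_iota; lia.
    apply/and4P; split => //; case/orP: hij => /eqP -> //; lia.
  + apply/allpairsP; exists (i, j); split => //=; rewrite ?mem_iota; last by rewrite /d in jd; lia.
    have -> : 1 :: iota 2 (size beta) = iota 1 (size beta).+1 by []. rewrite mem_iota; case/orP: hij => /eqP ->; lia.
Qed.

Definition cells' := map top (iota 1 d) ++ map bot (iota 1 d).

Lemma mem_cells' c : (c \in cells') = inCells c.
Proof.
case: c => i j; rewrite mem_cat /inCells /=.
apply/idP/idP.
- case/orP => /mapP [j' hj' [-> ->]]; move: hj'; rewrite mem_iota => hj';
   (apply/and3P; split; [lia|lia|]); rewrite eqxx ?orbT //.
- case/and3P => j0 jd /orP[] /eqP ->; apply/orP; [left|right]; apply/mapP; exists j => //;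
   rewrite mem_iota; lia.
Qed.

Lemma uniq_cellsS : uniq (cellsS beta).
Proof.
rewrite /cellsS filter_uniq // allpairs_uniq ?iota_uniq //.
by move=> [a b] [a' b'] _ _ /= [-> ->].
Qed.

Lemma uniq_cells' : uniq cells'.
Proof.
rewrite cat_uniq !map_inj_uniq ?iota_uniq //; try by move=> x y [].
rewrite andbT /=; apply/hasP => [[c /mapP [j _ ->] /mapP [j' _]]].
rewrite /top /bot => -[] e1 e2; subst j'; lia.
Qed.

Lemma size_cellsS : size (cellsS beta) = 2 * d.
Proof.
have -> : size (cellsS beta) = size cells'.
  apply: perm_size; apply: uniq_perm; rewrite ?uniq_cellsS ?uniq_cells' //.
  by move=> c; rewrite mem_cellsS mem_cells'.
by rewrite size_cat !size_map size_iota; lia.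
Qed.

End Cells.

Definition psi (beta : seq nat) (p : seq bool) : seq (nat * nat) :=
  mkseq (fun k => if nth false p k then top beta (nups p k.+1) else bot beta (ndowns p k.+1))
        (size p).

Section Back.
Variable beta : seq nat.
Hypothesis hpos : all (fun b => 0 < b) beta.
Let m := size beta.
Let d := sumn beta.
Notation R := (rpart beta).
Notation blk := (blk beta).
Variable p : seq bool.
Hypothesis hE : inEd d (rlist beta) p.

Lemma hdy : dyck d p.
Proof. by case/andP: hE. Qed.

Lemma ret_x x : x \in rlist beta -> nups p (2 * x) = x /\ ndowns p (2 * x) = x.
Proof.
case/andP: hE => hd /allP h hx; have := h x hx; case/andP => /and4P[_ hs _ _] /eqP e.
have := nups_ndowns (p := p) (ltnW hs); lia.
Qed.

Lemma sep u v : 0 < v -> v <= d -> u <= d -> blk v < blk u ->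
  exists x, [/\ v <= x < u, nups p (2 * x) = x, ndowns p (2 * x) = x & x \in rlist beta].
Proof.
move=> v0 vd ud hb; exists (R (blk v)).
have h1 := blk_spec vd.
have h2 : R (blk v) < u by rewrite ltnNge; apply/negP => /blk_min; lia.
have h3 := blk_ge1 v0 vd; have h4 := blk_le_m ud.
have hx : R (blk v) \in rlist beta.
  by apply/mapP; exists (blk v) => //; rewrite mem_iota; rewrite /m in h4; lia.
have [e1 e2] := ret_x hx.
by split => //; apply/andP.
Qed.

Lemma size_psi : size (psi beta p) = 2 * d.
Proof. by rewrite size_mkseq (dy_size hdy). Qed.

Lemma nth_psi k : k < 2 * d -> nth (0, 0) (psi beta p) k =
  if nth false p k then top beta (nups p k.+1) else bot beta (ndowns p k.+1).
Proof. by move=> hk; rewrite nth_mkseq // (dy_size hdy). Qed.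

Lemma step_up k : k < 2 * d -> nth false p k ->
  nups p k.+1 = (nups p k).+1 /\ ndowns p k.+1 = ndowns p k.
Proof.
move=> hk hu; have hs : k < size p by rewrite (dy_size hdy).
by rewrite (nupsS hs) (ndownsS hs) hu addn1 addn0.
Qed.

Lemma step_down k : k < 2 * d -> ~~ nth false p k ->
  nups p k.+1 = nups p k /\ ndowns p k.+1 = (ndowns p k).+1.
Proof.
move=> hk hu; have hs : k < size p by rewrite (dy_size hdy).
by rewrite (nupsS hs) (ndownsS hs) hu (negbTE hu) addn1 addn0.
Qed.

Ltac nm a b := have := @nups_mono p a b; have := @ndowns_mono p a b.

Lemma linext_core a b : a < 2 * d -> b < 2 * d ->
  leS (nth (0, 0) (psi beta p) a) (nth (0, 0) (psi beta p) b) -> a <= b.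
Proof.
move=> ha hb; rewrite (nth_psi ha) (nth_psi hb) /leS.
move=> hle; case: (leqP a b) => // hba; exfalso; move: hle.
have hl1 := dy_le hdy a.+1; have hl2 := dy_le hdy b.+1.
have hd1 := nups_le_d hdy a.+1; have hd2 := ndowns_le_d hdy a.+1.
have hd3 := nups_le_d hdy b.+1; have hd4 := ndowns_le_d hdy b.+1.
nm b.+1 a; rewrite hba => m1 m2.
have {m1 m2} [m1 m2] := conj (m1 isT) (m2 isT).
case: (boolP (nth false p a)) => ha'; case: (boolP (nth false p b)) => hb';
  [have [e1 e2] := step_up ha ha' | have [e1 e2] := step_up ha ha'
  | have [e1 e2] := step_down ha ha' | have [e1 e2] := step_down ha ha'];
  rewrite /top /bot /= => /andP[c1 c2]; [lia|lia| |lia].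
(* a down, b up *)
have v0 : 0 < ndowns p a.+1 by rewrite e2.
have [x [/andP[x1 x2] u1 u2 _]] := sep v0 hd2 hd3 c1.
case: (leqP b.+1 (2 * x)) => h1.
  have := nups_mono p h1; rewrite u1 => h; clear -x2 h; lia.
case: (leqP (2 * x) a) => h2.
  have := ndowns_mono p h2; rewrite u2 => h.
  clear -h x1 e2; lia.
clear -h1 h2 hba; lia.
Qed.

Lemma uniq_psi : uniq (psi beta p).
Proof.
apply/(uniqP (0, 0)) => a b; rewrite !inE size_psi => ha hb e.
have r : forall c : nat * nat, leS c c by move=> c; rewrite /leS !leqnn.
apply/eqP; rewrite eqn_leq (linext_core ha hb) ?e ?r // (linext_core hb ha) // ?e ?r //.
Qed.

Lemma psi_inCells c : c \in psi beta p -> inCells beta c.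
Proof.
case/(nthP (0, 0)) => k; rewrite size_psi => hk <-; rewrite nth_psi //.
have hd1 := nups_le_d hdy k.+1; have hd2 := ndowns_le_d hdy k.+1.
rewrite /inCells /top /bot; case: (boolP (nth false p k)) => h.
- have [e1 _] := step_up hk h; rewrite /= eqxx /=; by rewrite hd1 e1.
- have [_ e1] := step_down hk h; rewrite /= eqxx orbT /=; by rewrite hd2 e1.
Qed.

Lemma psi_perm : perm_eq (psi beta p) (cellsS beta).
Proof.
apply: uniq_perm; rewrite ?uniq_psi ?uniq_cellsS //.
have sub : {subset psi beta p <= cellsS beta}.
  by move=> c hc; rewrite mem_cellsS; apply: psi_inCells.
have sz : size (cellsS beta) <= size (psi beta p) by rewrite size_cellsS size_psi.
by case: (uniq_min_size uniq_psi sub sz).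
Qed.

Lemma psi_linext : is_linext beta (psi beta p).
Proof.
apply/allP => a; rewrite mem_iota size_psi => ha; apply/allP => b; rewrite mem_iota => hb.
by apply/implyP; apply: linext_core; move: ha hb; rewrite !add0n => /andP[_ ?] /andP[_ ?].
Qed.

End Back.

Lemma rpart_strict beta l l' : all (fun b => 0 < b) beta -> l < l' -> l' <= size beta ->
  rpart beta l < rpart beta l'.
Proof.
move=> hp hl hl'; apply: leq_trans (rpart_mono beta hl).
rewrite rpartS -[X in X < _]addn0 ltn_add2l.
by apply: (all_nthP 0 hp); apply: leq_trans hl'.
Qed.

Lemma filter_take T (P : pred T) (s : seq T) k :
  filter P (take k s) = take (count P (take k s)) (filter P s).
Proof.
by rewrite -{3}(cat_take_drop k s) filter_cat take_size_cat // size_filter.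
Qed.

Section Fwd.
Variable beta : seq nat.
Hypothesis hpos : all (fun b => 0 < b) beta.
Let m := size beta.
Let d := sumn beta.
Notation R := (rpart beta).
Notation blk := (blk beta).
Variable s : seq (nat * nat).
Hypothesis hperm : perm_eq s (cellsS beta).
Hypothesis hlin : is_linext beta s.

Lemma s_uniq : uniq s.
Proof. by rewrite (perm_uniq hperm) uniq_cellsS. Qed.

Lemma s_size : size s = 2 * d.
Proof. by rewrite (perm_size hperm) size_cellsS. Qed.

Lemma s_mem c : (c \in s) = inCells beta c.
Proof. by rewrite (perm_mem hperm) mem_cellsS. Qed.

Lemma s_lin a b : a < size s -> b < size s ->
  leS (nth (0, 0) s a) (nth (0, 0) s b) -> a <= b.
Proof.
move=> ha hb; move/allP: hlin => /(_ a); rewrite mem_iota => /(_ ha) /allP /(_ b).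
by rewrite mem_iota => /(_ hb) /implyP.
Qed.

Lemma s_idx c c' : c \in s -> c' \in s -> leS c c' -> index c s <= index c' s.
Proof.
move=> hc hc' hle; apply: s_lin; rewrite ?index_mem ?nth_index //.
Qed.

Lemma take_closed c c' k : c \in s -> c' \in s -> leS c c' -> c' \in take k s -> c \in take k s.
Proof.
move=> hc hc' hle; rewrite !in_take // => h.
by apply: leq_ltn_trans h; apply: s_idx.
Qed.

Lemma top_mem j : 0 < j -> j <= d -> top beta j \in s.
Proof. by move=> h1 h2; rewrite s_mem /inCells /top /= h1 h2 eqxx. Qed.
Lemma bot_mem j : 0 < j -> j <= d -> bot beta j \in s.
Proof. by move=> h1 h2; rewrite s_mem /inCells /bot /= h1 h2 eqxx orbT. Qed.

Definition rcol (c c' : nat * nat) : bool := c.2 < c'.2.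

Lemma sorted_sub (P : pred (nat * nat)) :
  (forall c c', c \in s -> c' \in s -> P c -> P c' -> c'.2 <= c.2 -> leS c' c) ->
  sorted rcol (filter P s).
Proof.
move=> hP.
have tr : transitive rcol by move=> x y z; rewrite /rcol; apply: ltn_trans.
rewrite sorted_pairwise //.
pose r' := fun c c' => P c ==> P c' ==> rcol c c'.
have h1 : pairwise r' s.
  apply/(pairwiseP (0, 0)) => a b; rewrite !inE => ha hb hab.
  apply/implyP => pa; apply/implyP => pb; rewrite /rcol ltnNge; apply/negP => hyx.
  have := s_lin hb ha (hP _ _ (mem_nth _ ha) (mem_nth _ hb) pa pb hyx).
  by rewrite leqNgt hab.
have h2 := pairwise_filter P h1.
apply: (sub_in_pairwise (P := P)) h2; last by apply/allP => x; rewrite mem_filter => /andP[].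
by move=> x y px py; rewrite /r' -!topredE /= in px py *; rewrite px py.
Qed.

Lemma filter_top : filter (isTop beta) s = map (top beta) (iota 1 d).
Proof.
apply: (@irr_sorted_eq _ rcol).
- by move=> x y z; rewrite /rcol; apply: ltn_trans.
- by move=> x; rewrite /rcol ltnn.
- apply: sorted_sub => c c'; rewrite !s_mem /isTop => /and3P[c0 cd _] /and3P[c0' cd' _] /eqP e /eqP e' h.
  by rewrite /leS e e' h andbT; apply: blk_mono.
- by rewrite sorted_map; apply: (sub_sorted _ (iota_ltn_sorted 1 d)).
- move=> [i j]; rewrite mem_filter s_mem /inCells /isTop /=.
  apply/idP/idP.
  + case/andP => /eqP e /and3P[c0 cd _]; apply/mapP; exists j; first by rewrite mem_iota /d; lia.
    by rewrite /top e.
  + case/mapP => j'; rewrite mem_iota => hj [-> ->]; rewrite eqxx /=; move: hj; rewrite /d; lia.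
Qed.

Lemma filter_bot : filter (predC (isTop beta)) s = map (bot beta) (iota 1 d).
Proof.
apply: (@irr_sorted_eq _ rcol).
- by move=> x y z; rewrite /rcol; apply: ltn_trans.
- by move=> x; rewrite /rcol ltnn.
- apply: sorted_sub => [[i j] [i' j']]; rewrite !s_mem /isTop /inCells /= => /and3P[c0 cd hij] /and3P[c0' cd' hij'] t t' h.
  rewrite /leS /= h andbT.
  move: t t' hij hij' => /negbTE -> /negbTE -> /= /eqP -> /eqP ->.
  by rewrite ltnS; apply: blk_mono.
- by rewrite sorted_map; apply: (sub_sorted _ (iota_ltn_sorted 1 d)).
- move=> [i j]; rewrite mem_filter s_mem /inCells /isTop /=.
  apply/idP/idP.
  + case/andP => ne /and3P[c0 cd /orP[e|/eqP e]]; first by rewrite e in ne.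
    apply/mapP; exists j; first by rewrite mem_iota /d; lia.
    by rewrite /bot e.
  + case/mapP => j'; rewrite mem_iota => hj [-> ->]; rewrite eqxx orbT andbT.
    apply/andP; split; [apply/negP => /eqP; lia | move: hj; rewrite /d; lia].
Qed.

Definition Dp := map (isTop beta) s.

Lemma Dp_size : size Dp = 2 * d.
Proof. by rewrite size_map s_size. Qed.

Lemma nupsE k : nups Dp k = count (isTop beta) (take k s).
Proof. by rewrite /nups /Dp -map_take count_map. Qed.

Lemma ndownsE k : ndowns Dp k = count (predC (isTop beta)) (take k s).
Proof. by rewrite /ndowns /Dp -map_take count_map. Qed.

Lemma count_take_le (P : pred (nat * nat)) k : count P (take k s) <= count P s.
Proof. by rewrite -{2}(cat_take_drop k s) count_cat leq_addr. Qed.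

Lemma nups_Dp_le k : nups Dp k <= d.
Proof.
rewrite nupsE; apply: leq_trans (count_take_le _ _) _.
by rewrite -size_filter filter_top size_map size_iota.
Qed.

Lemma ndowns_Dp_le k : ndowns Dp k <= d.
Proof.
rewrite ndownsE; apply: leq_trans (count_take_le _ _) _.
by rewrite -size_filter filter_bot size_map size_iota.
Qed.

Lemma top_inj : injective (top beta).
Proof. by move=> x y [] _ ->. Qed.
Lemma bot_inj : injective (bot beta).
Proof. by move=> x y [] _ ->. Qed.

Lemma memTop j k : 0 < j -> j <= d -> (top beta j \in take k s) = (j <= nups Dp k).
Proof.
move=> j0 jd.
have -> : (top beta j \in take k s) = (top beta j \in filter (isTop beta) (take k s)).
  by rewrite mem_filter /isTop /top /= eqxx.
rewrite filter_take filter_top -nupsE -map_take take_iota (mem_map top_inj) mem_iota.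
have := nups_Dp_le k; lia.
Qed.

Lemma memBot j k : 0 < j -> j <= d -> (bot beta j \in take k s) = (j <= ndowns Dp k).
Proof.
move=> j0 jd.
have -> : (bot beta j \in take k s) = (bot beta j \in filter (predC (isTop beta)) (take k s)).
  rewrite mem_filter /isTop /bot /= andb_idl // => _; apply/negP => /eqP; lia.
rewrite filter_take filter_bot -ndownsE -map_take take_iota (mem_map bot_inj) mem_iota.
have := ndowns_Dp_le k; lia.
Qed.

Lemma s_psi : s = psi beta Dp.
Proof.
apply: (@eq_from_nth _ (0, 0)); first by rewrite size_mkseq size_map.
move=> k hk; rewrite nth_mkseq ?size_map // (nth_map (0, 0)) //.
have hs : k < size Dp by rewrite size_map.
have cin := mem_nth (0, 0) hk.
have idx : index (nth (0, 0) s k) s = k by rewrite index_uniq // s_uniq.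
have in1 : nth (0, 0) s k \in take k.+1 s by rewrite in_take // idx.
have in0 : nth (0, 0) s k \notin take k s by rewrite in_take // idx ltnn.
have hu := nupsS hs; have hd := ndownsS hs.
rewrite (nth_map (0, 0)) // in hu hd.
move: cin in1 in0 hu hd.
case: (nth (0, 0) s k) => i j; rewrite s_mem /inCells /isTop /= => /and3P[j0 jd hij].
case: (boolP (i == blk j)) => [/eqP e|ne] /=.
- have -> : (i, j) = top beta j by rewrite /top e.
  rewrite !memTop // => h1 h0 hu _; rewrite hu; congr top; lia.
- move: hij; rewrite (negbTE ne) /= => /eqP e.
  have -> : (i, j) = bot beta j by rewrite /bot e.
  rewrite !memBot // => h1 h0 _ hd; rewrite hd; congr bot; lia.
Qed.

Lemma leS_tb j : leS (top beta j) (bot beta j).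
Proof. by rewrite /leS /top /bot /= leqnSn leqnn. Qed.

Lemma Dp_le k : ndowns Dp k <= nups Dp k.
Proof.
case: (posnP (ndowns Dp k)) => [->//|v0].
have vd := ndowns_Dp_le k.
have hb : bot beta (ndowns Dp k) \in take k s by rewrite memBot.
have ht := take_closed (top_mem v0 vd) (bot_mem v0 vd) (leS_tb _) hb.
by rewrite memTop in ht.
Qed.

Lemma Dp_end : nups Dp (2 * d) = d /\ ndowns Dp (2 * d) = d.
Proof.
rewrite nupsE ndownsE take_oversize ?s_size // -!size_filter filter_top filter_bot.
by rewrite !size_map size_iota.
Qed.

Lemma Dp_dyck : dyck d Dp.
Proof.
have [e1 e2] := Dp_end.
rewrite /dyck Dp_size e1 e2 !eqxx andbT andTb.
by apply/allP => k _; apply: Dp_le.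
Qed.

Lemma Dp_ret x : x \in rlist beta -> is_return Dp (2 * x).
Proof.
case/mapP => l; rewrite mem_iota => hl ->.
have l1 : 0 < l by lia.
have l2 : l < size beta by lia.
have r0 : R 0 = 0 by rewrite /rpart take0.
have x0 : 0 < R l by have := rpart_strict hpos l1 (ltnW l2); rewrite r0.
have xd : R l < d by have := rpart_strict hpos l2 (leqnn _); rewrite (rpart_full (leqnn _)).
have b1 : blk (R l) <= l by apply: blk_min.
have b2 : l < blk (R l).+1 by apply: blk_lt.
have hsum := nups_ndowns (p := Dp) (k := 2 * R l); rewrite Dp_size in hsum.
have {hsum} hsum : nups Dp (2 * R l) + ndowns Dp (2 * R l) = 2 * R l by apply: hsum; lia.
have t1 := top_mem (ltn0Sn (R l)) xd; have t0 := top_mem x0 (ltnW xd).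
have u1 := bot_mem (ltn0Sn (R l)) xd; have u0 := bot_mem x0 (ltnW xd).
have hu : nups Dp (2 * R l) <= R l.
  rewrite leqNgt; apply/negP => h.
  have ht : top beta (R l).+1 \in take (2 * R l) s by rewrite memTop.
  have hle : leS (bot beta (R l)) (top beta (R l).+1) by rewrite /leS /top /bot /= leqnSn andbT; lia.
  have := take_closed u0 t1 hle ht; rewrite memBot //; lia.
have hd : ndowns Dp (2 * R l) <= R l.
  rewrite leqNgt; apply/negP => h.
  have ht : bot beta (R l).+1 \in take (2 * R l) s by rewrite memBot.
  have := take_closed t1 u1 (leS_tb _) ht; rewrite memTop //; lia.
apply: (dy_return Dp_dyck); [by rewrite x0 xd | lia | lia].
Qed.

Lemma Dp_inEd : inEd d (rlist beta) Dp.
Proof. by rewrite /inEd Dp_dyck; apply/allP => x; apply: Dp_ret. Qed.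

End Fwd.

Section Maj.
Variable beta : seq nat.
Hypothesis hpos : all (fun b => 0 < b) beta.
Let m := size beta.
Let d := sumn beta.
Notation R := (rpart beta).
Notation blk := (blk beta).

Lemma nu_top j : 0 < j -> j <= d -> nu beta (top beta j) = ftop beta j.
Proof. by move=> j0 jd; rewrite /nu /top /ftop /= subnn mul0n addn0. Qed.

Lemma nu_bot j : 0 < j -> j <= d -> nu beta (bot beta j) = gbot beta j.
Proof.
move=> j0 jd; rewrite /nu /bot /gbot /= subSnn mul1n /bpart -addnA [j + _]addnC addnA.
have b1 := blk_ge1 j0 jd.
by rewrite -rpartS prednK.
Qed.

Lemma rlist_uniq : uniq (rlist beta).
Proof.
rewrite map_inj_in_uniq ?iota_uniq // => l l'; rewrite !mem_iota => h1 h2 e.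
case: (ltngtP l l') => // hl.
- have : l' <= size beta by lia.
  by move/(rpart_strict hpos hl); rewrite e ltnn.
- have : l <= size beta by lia.
  by move/(rpart_strict hpos hl); rewrite e ltnn.
Qed.

Variable p : seq bool.
Hypothesis hE : inEd d (rlist beta) p.

Let hdy := hdy hE.
Let W := map (nu beta) (psi beta p).

Lemma size_W : size W = 2 * d.
Proof. by rewrite size_map (size_psi hE). Qed.

Lemma lab k : k < 2 * d -> nth 0 W k =
  if nth false p k then ftop beta (nups p k.+1) else gbot beta (ndowns p k.+1).
Proof.
move=> hk; rewrite (nth_map (0, 0)) ?(size_psi hE) // (nth_psi hE hk).
have hd1 := nups_le_d hdy k.+1; have hd2 := ndowns_le_d hdy k.+1.
case: (boolP (nth false p k)) => h.
- have [e1 _] := step_up hE hk h; rewrite nu_top //; lia.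
- have [_ e1] := step_down hE hk h; rewrite nu_bot //; lia.
Qed.

Definition S2 := map (fun x => 2 * x) (rlist beta).

Lemma S2_valley k : k \in S2 -> valley p k.
Proof.
case/mapP => x hx ->; case/andP: hE => _ /allP /(_ x hx) /andP[] //.
Qed.

Lemma desc_iff k : 0 < k < 2 * d ->
  (nth 0 W k.-1 > nth 0 W k) = valley p k && (k \notin S2).
Proof.
case/andP => k0 k2.
have ka : k.-1 < 2 * d by lia.
have ek : k.-1.+1 = k by lia.
rewrite (lab ka) (lab k2) ek.
have hl1 := dy_le hdy k; have hl2 := dy_le hdy k.+1.
have hd1 := nups_le_d hdy k; have hd2 := ndowns_le_d hdy k.
have hd3 := nups_le_d hdy k.+1; have hd4 := ndowns_le_d hdy k.+1.
have vk : valley p k = ~~ nth false p k.-1 && nth false p k.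
  rewrite /valley k0 (dy_size hdy) k2 /= (set_nth_default false) // (dy_size hdy); lia.
rewrite vk.
case: (boolP (nth false p k.-1)) => ha; case: (boolP (nth false p k)) => hb /=.
- have [e1 _] := step_up hE ka ha; have [e2 _] := step_up hE k2 hb; rewrite ek in e1.
  apply/negbTE; rewrite -leqNgt; apply: ltnW; apply: ff; lia.
- have [e1 f1] := step_up hE ka ha; have [e2 f2] := step_down hE k2 hb; rewrite ek in e1 f1.
  apply/negbTE; rewrite -leqNgt; apply: ltnW; apply: fg; try lia.
  rewrite leqNgt; apply/negP => c1.
  have [x [/andP[x1 x2] u1 u2 _]] := sep hpos hE (v := ndowns p k.+1) (u := nups p k) ltac:(lia) hd4 hd1 c1.
  case: (leqP k (2 * x)) => h1.
    by have := nups_mono p h1; lia.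
  by have := ndowns_mono p (ltnW h1); lia.
- have [e1 f1] := step_down hE ka ha; have [e2 f2] := step_up hE k2 hb; rewrite ek in e1 f1.
  case: (ltnP (blk (ndowns p k)) (blk (nups p k.+1))) => c1.
  + have [x [/andP[x1 x2] u1 u2 xr]] := sep hpos hE (v := ndowns p k) (u := nups p k.+1) ltac:(lia) hd2 hd3 c1.
    have ekx : k = 2 * x.
      case: (leqP k.+1 (2 * x)) => h1; first by have := nups_mono p h1; lia.
      case: (leqP k (2 * x)) => h2; first lia.
      have h3 : 2 * x <= k.-1 by lia.
      by have := ndowns_mono p h3; lia.
    have -> : k \in S2 by rewrite ekx; apply: map_f.
    apply/negbTE; rewrite -leqNgt; apply: ltnW; apply: gf; lia.
  + have -> : k \notin S2.
      apply/negP => /mapP [x xr ekx].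
      have [u1 u2] := ret_x hpos hE xr; rewrite -ekx in u1 u2.
      rewrite e2 u1 u2 in c1.
      case/mapP: xr => l; rewrite mem_iota => hl ex.
      have xd : x < d by lia.
      have b1 : blk x <= l by apply: blk_min; rewrite ex.
      have b2 : l < blk x.+1 by apply: blk_lt; rewrite ?ex //; lia.
      lia.
    apply: fg; lia.
- have [e1 f1] := step_down hE ka ha; have [e2 f2] := step_down hE k2 hb; rewrite ek in e1 f1.
  apply/negbTE; rewrite -leqNgt; apply: ltnW; apply: gg; lia.
Qed.

Lemma sum_shift n (P Q : pred nat) :
  (forall k, 0 < k < n -> P k = Q k) -> Q 0 = false ->
  \sum_(1 <= k < n | P k) k = \sum_(0 <= k < n | Q k) k.
Proof.
case: n => [|n] h q0; first by rewrite !big_geq.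
rewrite [RHS]big_ltn_cond //= q0; apply: congr_big_nat => // k hk; rewrite h //; lia.
Qed.

Lemma S2_uniq : uniq S2.
Proof.
rewrite map_inj_uniq ?rlist_uniq // => x y; lia.
Qed.

Lemma S2_lt k : k \in S2 -> k < 2 * d.
Proof. by move/S2_valley => /and4P[_ + _ _]; rewrite (dy_size hdy). Qed.

Lemma maj_W : maj W = majD p - 2 * sumn (rlist beta).
Proof.
suff -> : majD p = maj W + 2 * sumn (rlist beta) by rewrite addnK.
rewrite /majD /maj size_W (dy_size hdy).
rewrite (bigID (fun k => k \in S2)) /= addnC; congr (_ + _).
- apply: esym; apply: sum_shift => // k hk; exact: desc_iff.
- have -> : \sum_(0 <= k < 2 * d | valley p k && (k \in S2)) k = \sum_(0 <= k < 2 * d | k \in S2) k.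
    apply: congr_big_nat => // k hk.
    by case: (boolP (k \in S2)) => h; rewrite ?andbF ?andbT //; apply: S2_valley.
  rewrite -big_filter.
  have pe : perm_eq [seq k <- index_iota 0 (2 * d) | k \in S2] S2.
    apply: uniq_perm; rewrite ?S2_uniq ?filter_uniq ?iota_uniq //.
    move=> k; rewrite mem_filter mem_index_iota; apply/andP/idP => [[]//|h].
    by split => //; apply: S2_lt.
  rewrite (perm_big _ pe) /S2 big_map sumnE big_distrr //.
Qed.

End Maj.
Unset Implicit Arguments.

Lemma ftop_neq_gbot {beta} u v : 0 < u -> u <= sumn beta -> 0 < v -> v <= sumn beta ->
  ftop beta u != gbot beta v.
Proof.
move=> h1 h2 h3 h4; case: (leqP (blk beta u) (blk beta v)) => hb.
- by rewrite neq_ltn (fg h1 h2 h3 h4 hb).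
- by rewrite neq_ltn (gf h1 h2 h3 h4 hb) orbT.
Qed.

Lemma W_inj beta (hpos : all (fun b => 0 < b) beta) p p' :
  inEd (sumn beta) (rlist beta) p -> inEd (sumn beta) (rlist beta) p' ->
  map (nu beta) (psi beta p) = map (nu beta) (psi beta p') -> p = p'.
Proof.
move=> hE hE' e.
have s1 := dy_size (hdy hE); have s2 := dy_size (hdy hE').
apply: (@eq_from_nth _ false); first by rewrite s1 s2.
move=> k; rewrite s1 => hk.
have := congr1 (fun w => nth 0%N w k) e => /=.
rewrite (lab hpos hE hk) (lab hpos hE' hk).
have b1 := nups_le_d (hdy hE) k.+1; have b2 := ndowns_le_d (hdy hE) k.+1.
have b3 := nups_le_d (hdy hE') k.+1; have b4 := ndowns_le_d (hdy hE') k.+1.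
case: (boolP (nth false p k)) => h; case: (boolP (nth false p' k)) => h' //.
- have [e1 _] := step_up hE hk h; have [_ e2] := step_down hE' hk h'.
  have u0 : 0 < nups p k.+1 by rewrite e1.
  have v0 : 0 < ndowns p' k.+1 by rewrite e2.
  by move=> ee; have := ftop_neq_gbot _ _ u0 b1 v0 b4; rewrite ee eqxx.
- have [_ e1] := step_down hE hk h; have [e2 _] := step_up hE' hk h'.
  have u0 : 0 < nups p' k.+1 by rewrite e2.
  have v0 : 0 < ndowns p k.+1 by rewrite e1.
  by move=> ee; have := ftop_neq_gbot _ _ u0 b3 v0 b2; rewrite ee eqxx.
Qed.

Local Open Scope ring_scope.

Theorem proposition3p8 (beta : seq nat) (d : nat) :
  all (fun b => 0 < b)%N beta -> sumn beta = d ->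
  \sum_(w <- linext_perms beta) 'X^(maj w)
  = \sum_(D : (2 * d)%N.-tuple bool | inEd d (rlist beta) D)
       'X^(majD D - 2 * sumn (rlist beta))%N :> {poly int}.
Proof.
move=> hpos hd; subst d.
set T := (2 * sumn beta)%N.-tuple bool.
set P := fun D : T => inEd (sumn beta) (rlist beta) D.
set Es := map val (filter P (index_enum T)).
set W' := fun p => map (nu beta) (psi beta p).
have Es_inEd : forall p, p \in Es -> inEd (sumn beta) (rlist beta) p.
  by move=> p /mapP [t]; rewrite mem_filter => /andP[ht _] ->.
have pe : perm_eq (linext_perms beta) (map W' Es).
  apply: uniq_perm; first exact: undup_uniq.
  - rewrite map_inj_in_uniq; last first.
      by move=> p p' hp hp' e; apply: (W_inj _ hpos _ _ (Es_inEd _ hp) (Es_inEd _ hp')); rewrite /W' in e.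
    rewrite /Es map_inj_uniq; last exact: val_inj.
    by rewrite filter_uniq // index_enum_uniq.
  - move=> w; rewrite /linext_perms mem_undup; apply/idP/idP.
    + case/mapP => s; rewrite mem_filter mem_permutations => /andP[hlin hperm] ->.
      rewrite {1}(s_psi hpos hperm hlin).
      apply: map_f; apply/mapP.
      exists (Tuple (introT eqP (Dp_size hperm))) => //.
      by rewrite mem_filter mem_index_enum andbT; apply: (Dp_inEd hpos hperm hlin).
    + case/mapP => p hp ->; have hE := Es_inEd _ hp.
      apply: map_f; rewrite mem_filter mem_permutations (psi_perm hpos hE).
      by rewrite (psi_linext hpos hE).
rewrite (perm_big _ pe) big_map.
have -> : \sum_(D : T | inEd (sumn beta) (rlist beta) D) 'X^(majD D - 2 * sumn (rlist beta))
        = \sum_(p <- Es) 'X^(majD p - 2 * sumn (rlist beta)) :> {poly int}.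
  by rewrite big_map big_filter.
apply: eq_big_seq => p hp; rewrite /W' (maj_W hpos (Es_inEd _ hp)) //.
Qed.
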